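(* In the multiple-choice setting of the context, suppose there exist a measurable $g:\mathsf Z\to\mathbb R_+$ and $m,d\in\mathbb R_+$ with $\beta m<1$ such that for all $z$ and $i,j=1,\dots,N$: $\int|r_i(z')|P_j(z,dz')\le g(z)$ and $\int g(z')P_i(z,dz')\le mg(z)+d$. Choose $m',d'>0$ with $Nm'+m>1$, $\beta(Nm'+m)<1$ and $d'\ge d/(Nm'+m-1)$, and let $k(z)=m'\sum_{i=1}^N|r_i(z)|+g(z)+d'$. Then: (1) the operator $Q(\psi_1,\dots,\psi_N)=\big(r_i+\beta P_i(\psi_1\vee\dots\vee\psi_N)\big)_{i=1}^N$ is a contraction mapping on $(\times_{i=1}^Nb_k\mathsf Z,\rho_k)$ of modulus $\beta(Nm'+m)$; (2) the unique fixed point of $Q$ in $\times_{i=1}^Nb_k\mathsf Z$ is $\psi^*=(\psi_1^*,\dots,\psi_N^* )$.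
   Context: $(\mathsf Z,\mathscr Z)$ is a measurable space; $P_1,\dots,P_N$ are stochastic kernels on it and $P_ih(z)=\int h(z')P_i(z,dz')$; $r_1,\dots,r_N:\mathsf Z\to\mathbb R$ are measurable; $\beta\in(0,1)$. Each period the agent observes $Z_t$ and chooses an alternative $i\in\{1,\dots,N\}$, receiving $r_i(Z_t)$, after which $Z_{t+1}\sim P_i(Z_t,\cdot)$. $v^*(z)$ is the maximal expected discounted sum of payoffs starting from $z$, and $\psi_i^*(z)=r_i(z)+\beta\int v^*(z')P_i(z,dz')$ is the expected value of choosing alternative $i$. $b_k\mathsf Z$ = measurable $f$ with $\|f\|_k=\sup|f|/k<\infty$; $\rho_k(\psi,\tilde\psi)=\max_i\|\psi_i-\tilde\psi_i\|_k$. *)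

(* Defs.v *)
From HB Require Import structures.
From mathcomp Require Import all_boot all_order all_algebra.
From mathcomp Require Import all_classical all_reals all_analysis.
Set Implicit Arguments. Unset Strict Implicit. Unset Printing Implicit Defensive.
Import Order.TTheory GRing.Theory Num.Theory numFieldNormedType.Exports.
Local Open Scope classical_set_scope.
Local Open Scope ring_scope.

Section Defs.
Context {d : measure_display} {T : measurableType d} {R : realType} {N : nat}.

Definition Pint (P : R.-pker T ~> T) (h : T -> R) (z : T) : R :=
  fine (\int[P z]_y (h y)%:E)%E.

(* psi_1 v ... v psi_N  (pointwise max; N > 0 assumed where used) *)
Definition vmax (psi : 'I_N -> T -> R) (z : T) : R :=
  fine (\big[Order.max/-oo%E]_(i < N) (psi i z)%:E).

Definition Qop (r : 'I_N -> T -> R) (beta : R) (P : 'I_N -> R.-pker T ~> T)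
  (psi : 'I_N -> T -> R) : 'I_N -> T -> R :=
  fun i z => r i z + beta * Pint (P i) (vmax psi) z.

Definition knorm (k f : T -> R) : R := sup [set `|f z| / k z | z in setT].

Definition bk (k : T -> R) (f : T -> R) : Prop :=
  measurable_fun setT f /\ exists C : R, forall z, `|f z| / k z <= C.

Definition prod_bk (k : T -> R) (psi : 'I_N -> T -> R) : Prop :=
  forall i, bk k (psi i).

Definition rho_k (k : T -> R) (psi psi' : 'I_N -> T -> R) : R :=
  \big[Num.max/0]_(i < N) knorm k (psi i \- psi' i).

Definition contraction_on {X : Type} (S : X -> Prop) (F : X -> X)
  (rho : X -> X -> R) (lam : R) : Prop :=
  0 <= lam < 1 /\ (forall x, S x -> S (F x)) /\
  (forall x y, S x -> S y -> rho (F x) (F y) <= lam * rho x y).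

(* Markov (possibly nonstationary) deterministic policies *)
Definition policy (sigma : nat -> T -> 'I_N) : Prop :=
  forall t i, measurable (sigma t @^-1` [set i]).

(* expected payoff at time t: E_z r_{sigma_t(Z_t)}(Z_t) *)
Fixpoint expay (r : 'I_N -> T -> R) (P : 'I_N -> R.-pker T ~> T)
  (sigma : nat -> T -> 'I_N) (t : nat) : T -> R :=
  match t with
  | 0%N => fun z => r (sigma 0%N z) z
  | t'.+1 => fun z => Pint (P (sigma 0%N z)) (expay r P (fun s => sigma s.+1) t') z
  end.

Definition vpol (r : 'I_N -> T -> R) (beta : R) (P : 'I_N -> R.-pker T ~> T)
  (sigma : nat -> T -> 'I_N) (z : T) : R :=
  limn (series (fun t => beta ^+ t * expay r P sigma t z)).

Definition vstar (r : 'I_N -> T -> R) (beta : R) (P : 'I_N -> R.-pker T ~> T)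
  (z : T) : \bar R :=
  ereal_sup [set (vpol r beta P sigma z)%:E | sigma in policy].

Definition psistar (r : 'I_N -> T -> R) (beta : R) (P : 'I_N -> R.-pker T ~> T)
  : 'I_N -> T -> R :=
  fun i z => r i z + beta * Pint (P i) (fun z' => fine (vstar r beta P z')) z.

End Defs.

(* Main.v *)
Require Import Defs.
From HB Require Import structures.
From mathcomp Require Import all_boot all_order all_algebra.
From mathcomp Require Import all_classical all_reals all_analysis.
From mathcomp Require Import measurable_realfun.
From mathcomp Require Import ring lra.
Import Order.TTheory GRing.Theory Num.Theory numFieldNormedType.Exports.
Local Open Scope classical_set_scope.
Local Open Scope ring_scope.
Set Implicit Arguments. Unset Strict Implicit. Unset Printing Implicit Defensive.

Lemma geo_le0 (R : realType) (a c L : R) : 0 <= L < 1 ->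
  (forall n, a <= c * L ^+ n) -> a <= 0.
Proof.
move=> /andP[L0 L1] h.
have hL : `|L| < 1 by rewrite ger0_norm.
have H : (fun n => c * L ^+ n) @ \oo --> c * 0 := @cvgMl_tmp _ _ _ _ (fun n => L ^+ n) c 0 (cvg_expr hL).
have H' : (fun n => c * L ^+ n) @ \oo --> 0.
  by rewrite -[X in _ --> X](mulr0 c); apply: H.
rewrite -(cvg_lim _ H') //.
apply: limr_ge; first by apply/cvg_ex; exists 0.
by apply: nearW.
Qed.
Lemma lim_le_near (R : realType) (u : nat -> R) n b : cvgn u ->
  (forall p, (n <= p)%N -> u p <= b) -> limn u <= b.
Proof.
move=> cu h; apply: limr_le => //; exists n => // p; exact: h.
Qed.
Lemma lim_ge_near (R : realType) (u : nat -> R) n b : cvgn u ->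
  (forall p, (n <= p)%N -> b <= u p) -> b <= limn u.
Proof.
move=> cu h; apply: limr_ge => //; exists n => // p; exact: h.
Qed.

Section Main.
Context (d : measure_display) (T : measurableType d) (R : realType)
  (N : nat) (P : 'I_N -> R.-pker T ~> T) (r : 'I_N -> T -> R) (beta : R)
  (g : T -> R) (m dd m' d' : R).
Hypothesis N0 : (0 < N)%N.
Hypothesis mr : forall i, measurable_fun setT (r i).
Hypothesis beta01 : 0 < beta < 1.
Hypothesis mg : measurable_fun setT g.
Hypothesis g0 : forall z, 0 <= g z.
Hypothesis m0 : 0 <= m.
Hypothesis dd0 : 0 <= dd.
Hypothesis rg : forall z (i j : 'I_N), (\int[P j z]_y (`|r i y|)%:E <= (g z)%:E)%E.
Hypothesis gg : forall z (i : 'I_N), (\int[P i z]_y (g y)%:E <= (m * g z + dd)%:E)%E.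
Hypothesis m'0 : 0 < m'.
Hypothesis d'0 : 0 < d'.
Hypothesis lam1 : 1 < N%:R * m' + m.
Hypothesis L1 : beta * (N%:R * m' + m) < 1.
Hypothesis dd' : dd / (N%:R * m' + m - 1) <= d'.

Let lam := N%:R * m' + m.
Let L := beta * lam.
Definition kk := fun z => m' * (\sum_(i < N) `|r i z|) + g z + d'.

Lemma sumr_ge0' z : 0 <= \sum_(i < N) `|r i z|.
Proof. by apply: sumr_ge0 => i _. Qed.

Lemma kk_gt0 z : 0 < kk z.
Proof.
rewrite /kk; apply: ltr_wpDl; last exact: d'0.
apply: addr_ge0; last exact: g0.
by apply: mulr_ge0; [exact: ltW|exact: sumr_ge0'].
Qed.

Lemma kk_ge0 z : 0 <= kk z. Proof. exact: ltW (kk_gt0 z). Qed.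

Lemma mkk : measurable_fun setT kk.
Proof.
rewrite /kk; apply: measurable_realfun.measurable_funD; last exact: measurable_cst.
apply: measurable_realfun.measurable_funD => //.
apply: measurable_realfun.measurable_funM; first exact: measurable_cst.
apply: measurable_sum => i.
exact: measurableT_comp (@measurable_realfun.normr_measurable R setT) (mr i).
Qed.

Lemma r_le_k i z : `|r i z| <= kk z / m'.
Proof.
rewrite ler_pdivlMr // mulrC /kk -addrA ler_wpDr //.
  by apply: addr_ge0 => //; exact: ltW.
rewrite ler_pM2l // (bigD1 i) //= ler_wpDr //.
by apply: sumr_ge0.
Qed.

Lemma L_ge0 : 0 <= L.
Proof. rewrite /L /lam; apply: mulr_ge0; [case/andP: beta01 => /ltW|apply: ltW; apply: lt_trans lam1]. done. done. Qed.

Lemma lam_gt0 : 0 < lam.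
Proof. exact: lt_trans lam1. Qed.

Lemma mS : measurable_fun setT (fun y => \sum_(j < N) `|r j y|).
Proof.
apply: measurable_sum => j.
exact: measurableT_comp (@measurable_realfun.normr_measurable R setT) (mr j).
Qed.

Lemma int_kk i z : (\int[P i z]_y (kk y)%:E <= (lam * kk z)%:E)%E.
Proof.
rewrite /kk.
under eq_integral do rewrite !EFinD.
have mS' : measurable_fun setT (fun y => m' * \sum_(j < N) `|r j y|).
  apply: measurable_realfun.measurable_funM => //.
  exact: mS.
have A0 : forall y, setT y -> (0 <= (m' * \sum_(j < N) `|r j y|)%:E + (g y)%:E)%E.
  by move=> y _; rewrite -EFinD lee_fin addr_ge0 // mulr_ge0 ?sumr_ge0' ?ltW.
have A1 : measurable_fun setT (fun y => ((m' * \sum_(j < N) `|r j y|)%:E + (g y)%:E)%E : \bar R).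
  by apply: emeasurable_funD => //; apply/measurable_EFinP => //; exact: mS'.
have A2 : forall y : T, setT y -> (0 <= (cst d'%:E : T -> \bar R) y)%E.
  by move=> y _; rewrite lee_fin ltW.
rewrite (ge0_integralD _ _ A0 A1 A2 (measurable_cst _)) //.
have B0 : forall y, setT y -> (0 <= (m' * \sum_(j < N) `|r j y|)%:E)%E.
  by move=> y _; rewrite lee_fin mulr_ge0 ?sumr_ge0' ?ltW.
have B1 : forall y, setT y -> (0 <= (g y)%:E)%E.
  by move=> y _; rewrite lee_fin.
have B2 : measurable_fun setT (fun y => (m' * \sum_(j < N) `|r j y|)%:E : \bar R).
  by apply/measurable_EFinP; exact: mS'.
have B3 : measurable_fun setT (fun y => (g y)%:E : \bar R).
  by apply/measurable_EFinP.
rewrite (ge0_integralD _ _ B0 B2 B1 B3) //.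
rewrite (_ : (\int[P i z]_x d'%:E = d'%:E)%E); last first.
  by rewrite -[X in (X = _)%E]/(\int[P i z]_x (cst d'%:E) x)%E integral_cst // prob_kernel mule1.
under eq_integral do rewrite EFinM.
have C0 : forall y, setT y -> (0 <= (\sum_(j < N) `|r j y|)%:E)%E.
  by move=> y _; rewrite lee_fin sumr_ge0'.
have C1 : measurable_fun setT (fun y => (\sum_(j < N) `|r j y|)%:E : \bar R).
  by apply/measurable_EFinP; exact: mS.
rewrite (ge0_integralZl_EFin _ _ C0 C1 (ltW m'0)) //.
under eq_integral do rewrite -sumEFin.
have D0 : forall j, measurable_fun setT (fun y => (`|r j y|)%:E : \bar R).
  move=> j; apply/measurable_EFinP.
  exact: measurableT_comp (@measurable_realfun.normr_measurable R setT) (mr j).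
have D1 : forall j y, setT y -> (0 <= (`|r j y|)%:E)%E.
  by move=> j y _; rewrite lee_fin.
rewrite (ge0_integral_sum _ _ D0 D1) //.
apply: (@le_trans _ _ ((m' * (N%:R * g z))%:E + (m * g z + dd)%:E + d'%:E)%E).
  apply: leeD => //; apply: leeD => //.
  rewrite EFinM lee_pmul2l ?lte_fin //.
  apply: (@le_trans _ _ (\sum_(j < N) (g z)%:E)%E).
    by apply: lee_sum => j _; exact: rg.
  by rewrite sumEFin sumr_const card_ord mulr_natl.
rewrite -!EFinD lee_fin.
have h1 : dd <= (lam - 1) * d'.
  by rewrite mulrC -ler_pdivrMr // subr_gt0.
have h2 : 0 <= lam * (m' * \sum_(i0 < N) `|r i0 z|).
  by rewrite mulr_ge0 ?(ltW lam_gt0) // mulr_ge0 ?sumr_ge0' ?ltW.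
rewrite /lam in h1 h2 *.
nra.
Qed.


Definition Bf (f : T -> R) := measurable_fun setT f /\
  exists2 C, 0 <= C & forall z, `|f z| <= C * kk z.

Lemma Bf0 : Bf (fun _ => 0).
Proof. split; first exact: measurable_cst. by exists 0 => // z; rewrite normr0 mul0r. Qed.

Lemma BfD f h : Bf f -> Bf h -> Bf (fun y => f y + h y).
Proof.
move=> [mf [C C0 hC]] [mh [D D0 hD]]; split; first exact: measurable_funD.
exists (C + D); first exact: addr_ge0.
move=> z; rewrite mulrDl; apply: le_trans (ler_normD _ _) _; exact: lerD.
Qed.

Lemma BfZ c f : Bf f -> Bf (fun y => c * f y).
Proof.
move=> [mf [C C0 hC]]; split; first by apply: measurable_funM => //; exact: measurable_cst.
exists (`|c| * C); first by rewrite mulr_ge0.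
by move=> z; rewrite normrM -mulrA ler_wpM2l.
Qed.

Lemma BfB f h : Bf f -> Bf h -> Bf (fun y => f y - h y).
Proof.
move=> bf bh; suff -> : (fun y => f y - h y) = (fun y => f y + -1 * h y).
  exact: BfD bf (BfZ (-1) bh).
by apply: funext => y; rewrite mulN1r.
Qed.

Lemma Bfr i : Bf (r i).
Proof.
split => //; exists (m'^-1); first by rewrite invr_ge0 ltW.
by move=> z; rewrite mulrC; exact: r_le_k.
Qed.

Lemma Bfk : Bf kk.
Proof. split; first exact: mkk. by exists 1 => // z; rewrite mul1r ger0_norm ?kk_ge0. Qed.

Lemma kk_int i z : (P i z).-integrable setT (EFin \o kk).
Proof.
apply/integrableP; split; first by apply/measurable_EFinP; exact: mkk.
apply: (@le_lt_trans _ _ (lam * kk z)%:E); last exact: ltry.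
rewrite (eq_integral (fun y => (kk y)%:E)); first exact: int_kk.
by move=> y _ /=; rewrite ger0_norm // kk_ge0.
Qed.

Lemma B_int i z f : Bf f -> (P i z).-integrable setT (EFin \o f).
Proof.
move=> [mf [C C0 hC]].
apply/integrableP; split; first by apply/measurable_EFinP.
apply: (@le_lt_trans _ _ (C * (lam * kk z))%:E); last exact: ltry.
apply: (@le_trans _ _ (\int[P i z]_y (C%:E * (kk y)%:E))%E).
  apply: ge0_le_integral => //.
  - apply: measurableT_comp => //; apply/measurable_EFinP; exact: mf.
  - apply: emeasurable_funM; first exact: measurable_cst.
    by apply/measurable_EFinP; exact: mkk.
  - by move=> y _ /=; rewrite -EFinM lee_fin hC.
have K0 : forall y, setT y -> (0 <= (kk y)%:E)%E.
  by move=> y _; rewrite lee_fin kk_ge0.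
have K1 : measurable_fun setT (fun y => (kk y)%:E : \bar R).
  by apply/measurable_EFinP; exact: mkk.
rewrite (ge0_integralZl_EFin _ _ K0 K1 C0) //.
by rewrite EFinM lee_wpmul2l ?lee_fin ?int_kk.
Qed.

Lemma Pint_fin i z f : Bf f -> (\int[P i z]_y (f y)%:E)%E = (Pint (P i) f z)%:E.
Proof.
move=> bf; rewrite /Pint fineK //.
exact: (integrable_fin_num measurableT (B_int i z bf)).
Qed.

Lemma Pint_D i z f h : Bf f -> Bf h ->
  Pint (P i) (fun y => f y + h y) z = Pint (P i) f z + Pint (P i) h z.
Proof.
move=> bf bh; apply/eqP; rewrite -(@eqe R) -Pint_fin; last exact: BfD.
rewrite EFinD -!Pint_fin //.
rewrite (eq_integral ((EFin \o f) \+ (EFin \o h))%E); last by move=> y _; rewrite EFinD.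
by rewrite integralD_EFin //; apply: B_int.
Qed.

Lemma Pint_Z i z c f : Bf f ->
  Pint (P i) (fun y => c * f y) z = c * Pint (P i) f z.
Proof.
move=> bf; apply/eqP; rewrite -(@eqe R) -Pint_fin; last exact: BfZ.
rewrite EFinM -!Pint_fin //.
rewrite (eq_integral (fun y => c%:E * (EFin \o f) y)%E); last by move=> y _; rewrite EFinM.
by rewrite integralZl //; apply: B_int.
Qed.

Lemma Pint_k i z : Pint (P i) kk z <= lam * kk z.
Proof. by rewrite -lee_fin -Pint_fin ?int_kk //; exact: Bfk. Qed.

Lemma Pint_mono i z f h : Bf f -> Bf h -> (forall y, f y <= h y) ->
  Pint (P i) f z <= Pint (P i) h z.
Proof.
move=> bf bh fh; rewrite -lee_fin -!Pint_fin //.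
apply: le_integral => //; try exact: B_int.
by move=> y _; rewrite lee_fin.
Qed.

Lemma Pint_le i z f h c : Bf f -> Bf h -> 0 <= c ->
  (forall y, f y <= h y + c * kk y) ->
  Pint (P i) f z <= Pint (P i) h z + c * (lam * kk z).
Proof.
move=> bf bh c0 fh.
apply: le_trans (Pint_mono i z bf (BfD bh (BfZ c Bfk)) fh) _.
rewrite Pint_D //; last exact: BfZ Bfk.
rewrite Pint_Z; last exact: Bfk.
by rewrite lerD2l ler_wpM2l // Pint_k.
Qed.

Lemma Pint_lip i z f h c : Bf f -> Bf h -> 0 <= c ->
  (forall y, `|f y - h y| <= c * kk y) ->
  `|Pint (P i) f z - Pint (P i) h z| <= c * (lam * kk z).
Proof.
move=> bf bh c0 fh.
have H1 : Pint (P i) h z <= Pint (P i) f z + c * (lam * kk z).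
  apply: Pint_le => // y.
  by have := fh y; rewrite ler_norml => /andP[+ _]; rewrite lerBrDr => H; lra.
have H2 : Pint (P i) f z <= Pint (P i) h z + c * (lam * kk z).
  apply: Pint_le => // y.
  by have := fh y; rewrite ler_norml => /andP[_ +] => H; lra.
by rewrite ler_norml; apply/andP; split; lra.
Qed.

Lemma Pint_bound i z f C : Bf f -> 0 <= C -> (forall y, `|f y| <= C * kk y) ->
  `|Pint (P i) f z| <= C * (lam * kk z).
Proof.
move=> bf C0 hf.
have := @Pint_lip i z f (fun _ => 0) C bf Bf0 C0.
rewrite (_ : Pint (P i) (fun _ => 0) z = 0); last first.
  by rewrite /Pint integral0.
by rewrite subr0; apply => y; rewrite subr0.
Qed.

Lemma Pint_meas i f : Bf f -> measurable_fun setT (Pint (P i) f).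
Proof.
move=> bf.
have mf : measurable_fun setT (EFin \o f) by apply/measurable_EFinP; case: bf.
have ip z : (P i z).-integrable setT (EFin \o f) by exact: B_int.
apply: (eq_measurable_fun
  (fun z => fine (\int[P i z]_y ((EFin \o f)^\+ y))%E - fine (\int[P i z]_y ((EFin \o f)^\- y))%E)).
  move=> z _; rewrite /Pint.
  have -> : (\int[P i z]_y (f y)%:E = \int[P i z]_y ((EFin \o f)^\+ y) - \int[P i z]_y ((EFin \o f)^\- y))%E.
    exact: integralE.
  have h1 : (\int[P i z]_y ((EFin \o f)^\+ y))%E \is a fin_num.
    rewrite ge0_fin_numE; first exact: integral_funepos_lt_pinfty (ip z).
    by apply: integral_ge0 => y _; exact: funepos_ge0.
  have h2 : (\int[P i z]_y ((EFin \o f)^\- y))%E \is a fin_num.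
    rewrite ge0_fin_numE; first exact: integral_funeneg_lt_pinfty (ip z).
    by apply: integral_ge0 => y _; exact: funeneg_ge0.
  by rewrite (fineB h1 h2).
apply: measurable_funB.
- apply: measurableT_comp => //.
  apply: (measurable_fun_integral_kernel (l := P i)).
  + exact: measurable_kernel.
  + by move=> y; exact: funepos_ge0.
  + exact: measurable_funepos.
- apply: measurableT_comp => //.
  apply: (measurable_fun_integral_kernel (l := P i)).
  + exact: measurable_kernel.
  + by move=> y; exact: funeneg_ge0.
  + exact: measurable_funeneg.
Qed.

Section bigmax.
Local Open Scope ereal_scope.
Lemma bigmax_ge (s : seq 'I_N) (F : 'I_N -> R) i : i \in s ->
  (F i)%:E <= \big[Order.max/-oo]_(j <- s) (F j)%:E.
Proof.
elim: s => // a s IH; rewrite inE big_cons => /orP[/eqP ->|/IH H].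
  by rewrite le_max lexx.
by rewrite le_max H orbT.
Qed.

Lemma bigmax_ex (s : seq 'I_N) (F : 'I_N -> R) : s != [::] ->
  exists j, \big[Order.max/-oo]_(j <- s) (F j)%:E = (F j)%:E.
Proof.
elim: s => // a s IH _; rewrite big_cons.
case: s IH => [|b s] IH.
  by exists a; rewrite big_nil max_l // leNye.
have [j ->] := IH isT.
rewrite maxEle; case: ifP => _; [by exists j|by exists a].
Qed.

Lemma bigmax_meas (s : seq 'I_N) (psi : 'I_N -> T -> R) :
  (forall i, measurable_fun setT (psi i)) ->
  measurable_fun setT (fun z => \big[Order.max/-oo]_(j <- s) (psi j z)%:E : \bar R).
Proof.
move=> mpsi; elim: s => [|a s IH].
  under eq_fun do rewrite big_nil.
  exact: measurable_cst.
under eq_fun do rewrite big_cons.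
apply: measurable_maxe => //.
by apply/measurable_EFinP.
Qed.
End bigmax.

Lemma enum_ne0 : index_enum 'I_N != [::].
Proof.
apply/eqP => h; have := mem_index_enum (Ordinal N0).
by rewrite h.
Qed.

Lemma vmax_ex (psi : 'I_N -> T -> R) z : exists j, vmax psi z = psi j z.
Proof.
have [j hj] := bigmax_ex (fun j => psi j z) enum_ne0.
by exists j; rewrite /vmax hj.
Qed.

Lemma vmax_ge (psi : 'I_N -> T -> R) z i : psi i z <= vmax psi z.
Proof.
have [j hj] := bigmax_ex (fun j => psi j z) enum_ne0.
have := bigmax_ge (fun j => psi j z) (mem_index_enum i).
by rewrite /vmax hj lee_fin.
Qed.

Lemma vmax_meas (psi : 'I_N -> T -> R) : (forall i, measurable_fun setT (psi i)) ->
  measurable_fun setT (vmax psi).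
Proof.
move=> mpsi; rewrite /vmax; apply: measurableT_comp => //.
exact: bigmax_meas.
Qed.

Lemma vmax_lip (psi phi : 'I_N -> T -> R) z c : (forall i, `|psi i z - phi i z| <= c) ->
  `|vmax psi z - vmax phi z| <= c.
Proof.
move=> h; have [j hj] := vmax_ex psi z; have [l hl] := vmax_ex phi z.
have a1 := vmax_ge phi z j; have a2 := vmax_ge psi z l.
have := h j; have := h l; rewrite !ler_norml hj hl => /andP[b1 b2] /andP[b3 b4].
rewrite hj hl in a1 a2.
by apply/andP; split; lra.
Qed.

Definition PB (psi : 'I_N -> T -> R) := (forall i, measurable_fun setT (psi i)) /\
  exists2 C, 0 <= C & forall i z, `|psi i z| <= C * kk z.

Lemma PB_Bf psi : PB psi -> forall i, Bf (psi i).
Proof. by move=> [mp [C C0 hC]] i; split => //; exists C. Qed.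

Lemma Bf_PB psi : (forall i, Bf (psi i)) -> PB psi.
Proof.
move=> h; split; first by move=> i; case: (h i).
have /fin_all_exists [C hC] : forall i, exists C : R, 0 <= C /\ forall z, `|psi i z| <= C * kk z.
  by move=> i; case: (h i) => _ [C C0 hC]; exists C.
exists (\sum_i C i); first by apply: sumr_ge0 => i _; case: (hC i).
move=> i z; apply: le_trans (proj2 (hC i) z) _.
rewrite ler_wpM2r ?kk_ge0 // (bigD1 i) //= lerDl.
by apply: sumr_ge0 => j _; case: (hC j).
Qed.

Lemma Bf_vmax psi : PB psi -> Bf (vmax psi).
Proof.
move=> [mp [C C0 hC]]; split; first exact: vmax_meas.
by exists C => // z; have [j ->] := vmax_ex psi z.
Qed.

Lemma bk_Bf f : bk kk f <-> Bf f.
Proof.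
split.
  move=> [mf [C hC]]; split => //; exists (Num.max C 0); first by rewrite le_max lexx orbT.
  move=> z; rewrite -ler_pdivrMr ?kk_gt0 //; apply: le_trans (hC z) _.
  by rewrite le_max lexx.
move=> [mf [C C0 hC]]; split => //; exists C => z.
by rewrite ler_pdivrMr ?kk_gt0.
Qed.

Lemma prod_bk_PB psi : prod_bk kk psi <-> PB psi.
Proof.
split; first by move=> h; apply: Bf_PB => i; apply/bk_Bf; exact: h.
by move=> h i; apply/bk_Bf; exact: PB_Bf.
Qed.

Lemma Bf_Pint i f : Bf f -> Bf (Pint (P i) f).
Proof.
move=> bf; split; first exact: Pint_meas.
case: (bf) => _ [C C0 hC]; exists (C * lam); first by rewrite mulr_ge0 // ltW // lam_gt0.
by move=> z; rewrite -mulrA; exact: Pint_bound.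
Qed.

Lemma PB_Q psi : PB psi -> PB (Qop r beta P psi).
Proof.
move=> h; apply: Bf_PB => i.
apply: BfD; first exact: Bfr.
apply: BfZ; apply: Bf_Pint; exact: Bf_vmax.
Qed.

Lemma Q_lip psi phi c : PB psi -> PB phi -> 0 <= c ->
  (forall i z, `|psi i z - phi i z| <= c * kk z) ->
  forall i z, `|Qop r beta P psi i z - Qop r beta P phi i z| <= (L * c) * kk z.
Proof.
move=> hp hq c0 h i z; rewrite /Qop.
rewrite (_ : r i z + beta * _ - (r i z + beta * _) =
   beta * (Pint (P i) (vmax psi) z - Pint (P i) (vmax phi) z)); last by ring.
have b0 : 0 <= beta by case/andP: beta01 => /ltW.
rewrite normrM ger0_norm // /L -!mulrA ler_wpM2l //.
rewrite mulrCA.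
apply: Pint_lip => //; try exact: Bf_vmax.
by move=> y; apply: vmax_lip => j; exact: h.
Qed.

Lemma knorm_ub f : Bf f -> forall z, `|f z| / kk z <= knorm kk f.
Proof.
move=> [_ [C C0 hC]] z; apply: ub_le_sup; last by exists z.
exists C => _ [y _ <-]; by rewrite ler_pdivrMr ?kk_gt0.
Qed.

Lemma knorm_le f x : 0 <= x -> (forall z, `|f z| / kk z <= x) -> knorm kk f <= x.
Proof.
move=> x0 h; rewrite /knorm.
have [->|ne] := eqVneq [set `|f z| / kk z | z in [set: T]] set0; first by rewrite sup0.
apply: ge_sup; first exact/set0P.
by move=> _ [y _ <-].
Qed.

Lemma bigmaxr_ge (s : seq 'I_N) (F : 'I_N -> R) i : i \in s ->
  F i <= \big[Num.max/0]_(j <- s) F j.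
Proof.
elim: s => // a s IH; rewrite inE big_cons => /orP[/eqP ->|/IH H].
  by rewrite le_max lexx.
by rewrite le_max H orbT.
Qed.

Lemma bigmaxr_ge0 (s : seq 'I_N) (F : 'I_N -> R) : 0 <= \big[Num.max/0]_(j <- s) F j.
Proof.
elim: s => [|a s IH]; first by rewrite big_nil.
by rewrite big_cons le_max IH orbT.
Qed.

Lemma bigmaxr_le (s : seq 'I_N) (F : 'I_N -> R) x : 0 <= x -> (forall i, F i <= x) ->
  \big[Num.max/0]_(j <- s) F j <= x.
Proof.
move=> x0 h; elim: s => [|a s IH]; first by rewrite big_nil.
by rewrite big_cons ge_max h IH.
Qed.

Lemma rho_ge0 (psi phi : 'I_N -> T -> R) : 0 <= rho_k kk psi phi.
Proof. exact: bigmaxr_ge0. Qed.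

Lemma rho_pt psi phi : PB psi -> PB phi ->
  forall i z, `|psi i z - phi i z| <= rho_k kk psi phi * kk z.
Proof.
move=> hp hq i z; rewrite -ler_pdivrMr ?kk_gt0 //.
have := knorm_ub (BfB (PB_Bf hp i) (PB_Bf hq i)) z.
move/le_trans; apply.
exact: (bigmaxr_ge (fun i => knorm kk (psi i \- phi i)) (mem_index_enum i)).
Qed.

Lemma part1 : contraction_on (prod_bk kk) (Qop r beta P) (rho_k kk) L.
Proof.
split.
  rewrite L_ge0 /=; exact: L1.
split.
  by move=> x /prod_bk_PB hx; apply/prod_bk_PB; exact: PB_Q.
move=> x y /prod_bk_PB hx /prod_bk_PB hy.
have c0 := rho_ge0 x y.
have := Q_lip hx hy c0 (rho_pt hx hy) => hQ.
apply: bigmaxr_le; first by rewrite mulr_ge0 // L_ge0.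
move=> i; apply: knorm_le; first by rewrite mulr_ge0 // L_ge0.
by move=> z; rewrite ler_pdivrMr ?kk_gt0 //; exact: hQ.
Qed.

Definition xs (n : nat) : 'I_N -> T -> R := iter n (Qop r beta P) (fun _ _ => 0).

Lemma PB0 : PB (fun _ _ => 0).
Proof.
split; first by move=> i; exact: measurable_cst.
by exists 0 => // i z; rewrite normr0 mul0r.
Qed.

Lemma PB_xs n : PB (xs n).
Proof. elim: n => [|n IH]; first exact: PB0. by rewrite /xs iterS; exact: PB_Q. Qed.

Lemma L_lt1 : L < 1. Proof. exact: L1. Qed.

Section FixS.
Variable C0 : R.
Hypothesis C00 : 0 <= C0.
Hypothesis hC0 : forall i z, `|xs 1 i z| <= C0 * kk z.

Lemma xs_diff n i z : `|xs n.+1 i z - xs n i z| <= (C0 * L ^+ n) * kk z.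
Proof.
elim: n i z => [|n IH] i z; first by rewrite expr0 mulr1 /= subr0; exact: hC0.
change (`|Qop r beta P (xs n.+1) i z - Qop r beta P (xs n) i z| <= C0 * L ^+ n.+1 * kk z).
rewrite (_ : C0 * L ^+ n.+1 = L * (C0 * L ^+ n)); last first.
  by rewrite exprS; ring.
apply: Q_lip; [exact: PB_xs|exact: PB_xs| |exact: IH].
by rewrite mulr_ge0 // exprn_ge0 // L_ge0.
Qed.

Lemma xs_tail n j i z :
  (1 - L) * `|xs (n + j) i z - xs n i z| <= C0 * kk z * (L ^+ n - L ^+ (n + j)).
Proof.
elim: j => [|j IH]; first by rewrite addn0 !subrr normr0 !mulr0.
have h1 := xs_diff (n + j) i z.
have h2 : `|xs (n + j.+1) i z - xs n i z| <=
    `|xs (n + j).+1 i z - xs (n + j) i z| + `|xs (n + j) i z - xs n i z|.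
  rewrite addnS; apply: le_trans (ler_normD _ _); by rewrite subrKA.
have hL : 0 <= 1 - L by rewrite subr_ge0 ltW // L_lt1.
rewrite addnS in h2.
have h3 := ler_wpM2l hL h2.
have h4 := ler_wpM2l hL h1.
rewrite addnS exprS.
set a := `|_ - xs n i z| in h3 *; set b := `|xs (n + j).+1 i z - _| in h3 h4.
set c := `|xs (n + j) i z - _| in h3 IH.
set u := L ^+ (n + j) in IH h4 *.
set K := kk z in h4 IH *.
have hK : 0 <= C0 * K * u by rewrite mulr_ge0 ?mulr_ge0 ?kk_ge0 // exprn_ge0 // L_ge0.
nra.
Qed.

Lemma xs_tail' n p i z : (n <= p)%N ->
  `|xs p i z - xs n i z| <= (C0 / (1 - L) * L ^+ n) * kk z.
Proof.
move=> np; rewrite -(subnKC np).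
have hL : 0 < 1 - L by rewrite subr_gt0 L_lt1.
have := xs_tail n (p - n) i z.
rewrite -ler_pdivlMl // => h; apply: le_trans h _.
have hv : 0 <= (1 - L)^-1 by rewrite invr_ge0 ltW.
have hp : 0 <= (1 - L)^-1 * (C0 * kk z * L ^+ (n + (p - n))).
  by rewrite mulr_ge0 // mulr_ge0 ?mulr_ge0 ?kk_ge0 // exprn_ge0 // L_ge0.
set v := (1 - L)^-1 in hv hp *.
set w := L ^+ (n + (p - n)) in hp *.
nra.
Qed.

Lemma xs_cvg i z : cvgn (fun n => xs n i z).
Proof.
set u := fun n => xs n i z.
have E : u = series (fun t => u t.+1 - u t).
  by apply: funext => n; rewrite /series /= (telescope_sumr _ (leq0n n)) /u /= subr0.
rewrite E; apply: normed_cvg.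
apply: (@series_le_cvg _ _ (geometric (C0 * kk z) L)).
- by move=> n; exact: normr_ge0.
- by move=> n; rewrite /geometric /= mulr_ge0 ?mulr_ge0 ?kk_ge0 // exprn_ge0 // L_ge0.
- by move=> n; rewrite /geometric /= mulrAC; exact: xs_diff.
- by apply: is_cvg_geometric_series; rewrite ger0_norm ?L_ge0 // L_lt1.
Qed.

Definition psib : 'I_N -> T -> R := fun i z => limn (fun n => xs n i z).

Lemma psib_tail n i z : `|psib i z - xs n i z| <= (C0 / (1 - L) * L ^+ n) * kk z.
Proof.
rewrite /psib ler_norml; apply/andP; split.
  rewrite lerBrDr; apply: (lim_ge_near (n:=n) (@xs_cvg i z)) => p np.
  have := xs_tail' i z np; rewrite ler_norml => /andP[h _]; lra.
rewrite lerBlDr; apply: (lim_le_near (n:=n) (@xs_cvg i z)) => p np.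
have := xs_tail' i z np; rewrite ler_norml => /andP[_ h]; lra.
Qed.

Lemma PB_psib : PB psib.
Proof.
split.
  move=> i; apply: (@measurable_fun_cvg _ _ _ _ (fun n => xs n i)).
    by move=> n; case: (PB_xs n).
  by move=> z _; exact: (@xs_cvg i z).
have hL : 0 < 1 - L by rewrite subr_gt0 L_lt1.
exists (C0 / (1 - L)); first by rewrite divr_ge0 // ltW.
move=> i z; have := psib_tail 0 i z.
by rewrite /= subr0 expr0 mulr1.
Qed.

Lemma psib_fix : Qop r beta P psib = psib.
Proof.
apply: funext => i; apply: funext => z.
have hL : 0 < 1 - L by rewrite subr_gt0 L_lt1.
set a := `|Qop r beta P psib i z - psib i z|.
suff : a <= 0 by rewrite normr_le0 subr_eq0 => /eqP.
apply: (@geo_le0 _ a (2 * (C0 / (1 - L)) * kk z * L) L); first by rewrite L_ge0 L_lt1.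
move=> n.
have c0 : 0 <= C0 / (1 - L) * L ^+ n.
  by apply: mulr_ge0; [rewrite divr_ge0 // ltW|rewrite exprn_ge0 // L_ge0].
have h1 := Q_lip PB_psib (PB_xs n) c0 (psib_tail n) i z.
have h2 := psib_tail n.+1 i z.
have h3 : a <= `|Qop r beta P psib i z - xs n.+1 i z| + `|psib i z - xs n.+1 i z|.
  rewrite /a (_ : Qop r beta P psib i z - psib i z =
     (Qop r beta P psib i z - xs n.+1 i z) - (psib i z - xs n.+1 i z)); last by ring.
  exact: ler_normB.
change (xs n.+1 i z) with (Qop r beta P (xs n) i z) in h3.
rewrite exprS in h2.
apply: le_trans h3 _.
have e : 2 * (C0 / (1 - L)) * kk z * L * L ^+ n =
  L * (C0 / (1 - L) * L ^+ n) * kk z + C0 / (1 - L) * (L * L ^+ n) * kk z by ring.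
by rewrite e; apply: lerD.
Qed.

End FixS.

Lemma ex_C0 : exists2 C0, 0 <= C0 & forall i z, `|xs 1 i z| <= C0 * kk z.
Proof. by case: (PB_xs 1) => _ [C C0 h]; exists C. Qed.

Lemma PB_psib' : PB psib.
Proof. by have [C0 C00 h] := ex_C0; exact: (PB_psib C00 h). Qed.

Lemma psib_fix' : Qop r beta P psib = psib.
Proof. by have [C0 C00 h] := ex_C0; exact: (psib_fix C00 h). Qed.

Definition w := vmax psib.

Lemma Bf_w : Bf w.
Proof. exact: Bf_vmax PB_psib'. Qed.

Lemma psib_eq i z : psib i z = r i z + beta * Pint (P i) w z.
Proof. by rewrite -{1}psib_fix'. Qed.

Lemma pw_meas (s : T -> 'I_N) (F : 'I_N -> T -> R) :
  (forall i, measurable (s @^-1` [set i])) -> (forall i, measurable_fun setT (F i)) ->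
  measurable_fun setT (fun z => F (s z) z).
Proof.
move=> ms mF.
apply: (eq_measurable_fun (fun z => \sum_(i < N) (\1_(s @^-1` [set i]) z : R) * F i z)).
  move=> z _; rewrite (bigD1 (s z)) //= big1 ?addr0.
    by rewrite indicE mem_set // mul1r.
  move=> j /negPf hj; rewrite indicE memNset ?mul0r //=.
  by move=> e; rewrite e eqxx in hj.
by apply: measurable_sum => i; apply: measurable_funM => //; exact: measurable_indic.
Qed.

Lemma policy_shift (sigma : nat -> T -> 'I_N) : policy sigma -> policy (fun s => sigma s.+1).
Proof. by move=> h t i; exact: h. Qed.

Lemma expay_B t : forall sigma : nat -> T -> 'I_N, policy sigma ->
  measurable_fun setT (expay r P sigma t) /\
  forall z, `|expay r P sigma t z| <= (lam ^+ t / m') * kk z.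
Proof.
elim: t => [|t IH] sigma hs.
  split.
    change (measurable_fun setT (fun z => r (sigma 0%N z) z)).
    by apply: (pw_meas (s := sigma 0%N) (F := r)) => // i; exact: hs.
  by move=> z /=; rewrite expr0 mul1r mulrC; exact: r_le_k.
have [m1 b1] := IH _ (policy_shift hs).
have B1 : Bf (expay r P (fun s => sigma s.+1) t).
  split => //; exists (lam ^+ t / m') => //.
  by rewrite divr_ge0 ?exprn_ge0 ?ltW ?lam_gt0.
split.
  change (measurable_fun setT (fun z => Pint (P (sigma 0%N z)) (expay r P (fun s => sigma s.+1) t) z)).
  apply: (pw_meas (s := sigma 0%N) (F := fun i => Pint (P i) (expay r P (fun s => sigma s.+1) t))).
    by move=> i; exact: hs.
  by move=> i; exact: Pint_meas.
move=> z /=.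
apply: le_trans (Pint_bound _ z B1 _ b1) _.
  by rewrite divr_ge0 ?exprn_ge0 ?ltW ?lam_gt0.
by rewrite exprS le_eqVlt; apply/orP; left; apply/eqP; ring.
Qed.

Definition Sn n (sigma : nat -> T -> 'I_N) := fun z => \sum_(0 <= t < n) beta ^+ t * expay r P sigma t z.

Lemma Bf_expay t (sigma : nat -> T -> 'I_N) : policy sigma -> Bf (expay r P sigma t).
Proof.
move=> hs; have [m1 b1] := expay_B t hs; split => //; exists (lam ^+ t / m') => //.
by rewrite divr_ge0 ?exprn_ge0 ?ltW ?lam_gt0.
Qed.

Lemma Bf_ext f h : (forall y, f y = h y) -> Bf f -> Bf h.
Proof. by move=> e; rewrite (funext e). Qed.

Lemma Pint_ext i z f h : (forall y, f y = h y) -> Pint (P i) f z = Pint (P i) h z.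
Proof. by move=> e; rewrite (funext e). Qed.

Lemma Bf_Sn n (sigma : nat -> T -> 'I_N) : policy sigma -> Bf (Sn n sigma).
Proof.
move=> hs; elim: n => [|n IH].
  by apply: (Bf_ext _ Bf0) => y; rewrite /Sn big_geq.
apply: (Bf_ext _ (BfD IH (BfZ (beta ^+ n) (Bf_expay n hs)))).
by move=> y; rewrite /Sn big_nat_recr.
Qed.

Lemma Pint_Sn i z n (sigma : nat -> T -> 'I_N) : policy sigma ->
  Pint (P i) (Sn n sigma) z = \sum_(0 <= t < n) beta ^+ t * Pint (P i) (expay r P sigma t) z.
Proof.
move=> hs; elim: n => [|n IH].
  rewrite big_geq // (Pint_ext _ _ (h := fun _ => 0)); first by rewrite /Pint integral0.
  by move=> y; rewrite /Sn big_geq.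
rewrite big_nat_recr //= -IH -Pint_Z; last exact: Bf_expay.
rewrite -Pint_D; [|exact: Bf_Sn|exact: BfZ (Bf_expay n hs)].
by apply: Pint_ext => y; rewrite /Sn big_nat_recr.
Qed.

Lemma Sn_rec n (sigma : nat -> T -> 'I_N) z : policy sigma ->
  Sn n.+1 sigma z = r (sigma 0%N z) z +
    beta * Pint (P (sigma 0%N z)) (Sn n (fun s => sigma s.+1)) z.
Proof.
move=> hs; rewrite /Sn big_nat_recl // expr0 mul1r /=.
congr (_ + _); rewrite Pint_Sn; last exact: policy_shift.
rewrite big_distrr /=; apply: eq_bigr => t _.
by rewrite exprS mulrA.
Qed.

Lemma ex_Cw : exists2 Cw, 0 <= Cw & forall z, `|w z| <= Cw * kk z.
Proof. by case: Bf_w => _ [C C0 h]; exists C. Qed.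

Section Bounds.
Variable Cw : R.
Hypothesis Cw0 : 0 <= Cw.
Hypothesis hCw : forall z, `|w z| <= Cw * kk z.

Lemma cL n : 0 <= Cw * L ^+ n.
Proof. by rewrite mulr_ge0 // exprn_ge0 // L_ge0. Qed.

Lemma UB n : forall (sigma : nat -> T -> 'I_N), policy sigma ->
  forall z, Sn n sigma z <= w z + (Cw * L ^+ n) * kk z.
Proof.
elim: n => [|n IH] sigma hs z.
  rewrite /Sn big_geq // expr0 mulr1.
  by have := hCw z; rewrite ler_norml => /andP[h _]; lra.
rewrite Sn_rec //.
set i := sigma 0%N z.
have h1 := Pint_le i z (Bf_Sn n (policy_shift hs)) Bf_w (cL n) (IH _ (policy_shift hs)).
have h2 := vmax_ge psib z i; rewrite -/w psib_eq in h2.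
have b0 : 0 <= beta by case/andP: beta01 => /ltW.
have h3 := ler_wpM2l b0 h1.
rewrite /L exprS.
set A := Pint (P i) (Sn n _) z in h3 *.
set B := Pint (P i) w z in h2 h3.
set K := kk z in h3 *.
set u := lam ^+ n in h3 *.
rewrite exprMn in h3 *.
nra.
Qed.

Definition first_max z (i : 'I_N) : bool :=
  (psib i z == w z) && [forall j : 'I_N, (j < i)%N ==> (psib j z != w z)].

Lemma first_ex z : exists i, first_max z i.
Proof.
have [j hj] := vmax_ex psib z.
have Pj : (fun i : 'I_N => psib i z == w z) j by rewrite /w hj.
case: (@arg_minnP _ j (fun i : 'I_N => psib i z == w z) (fun i : 'I_N => nat_of_ord i) Pj) => i Pi hi.
exists i; rewrite /first_max Pi /=; apply/forallP => l; apply/implyP => li.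
apply/negP => Pl; have := hi l Pl; rewrite leqNgt li //.
Qed.

Lemma first_uniq z i j : first_max z i -> first_max z j -> i = j.
Proof.
move=> /andP[Pi /forallP Fi] /andP[Pj /forallP Fj].
case: (ltngtP i j) => h.
- by have := Fj i; rewrite h Pi.
- by have := Fi j; rewrite h Pj.
- exact: val_inj.
Qed.

Definition sel z : 'I_N :=
  if [pick i | first_max z i] is Some i then i else Ordinal N0.

Lemma sel_spec z : first_max z (sel z).
Proof.
rewrite /sel; case: pickP => // h.
by have [i hi] := first_ex z; rewrite h in hi.
Qed.

Lemma bigI_mem (s : seq 'I_N) (p : pred 'I_N) (F : 'I_N -> set T) z :
  (\big[setI/setT]_(j <- s | p j) F j) z <-> (forall j, j \in s -> p j -> F j z).
Proof.
elim: s => [|a s IH]; first by rewrite big_nil; split.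
rewrite big_cons; case: ifP => pa.
  split.
    move=> [Fa /IH h] j; rewrite inE => /orP[/eqP ->|js] //; exact: h.
  move=> h; split; first by apply: h => //; rewrite inE eqxx.
  by apply/IH => j js; apply: h; rewrite inE js orbT.
rewrite IH; split.
  move=> h j; rewrite inE => /orP[/eqP ->|js]; first by rewrite pa.
  exact: h.
by move=> h j js; apply: h; rewrite inE js orbT.
Qed.

Lemma sel_meas i : measurable (sel @^-1` [set i]).
Proof.
pose E j := [set z | psib j z - w z = 0].
have mE j : measurable (E j).
  have mf : measurable_fun setT (fun z => psib j z - w z).
    apply: measurable_funB; [by case: PB_psib' => h _; exact: h|by case: Bf_w].
  have := mf measurableT [set 0] (measurable_set1 0).
  by rewrite setTI.
have -> : sel @^-1` [set i] =
    E i `&` \big[setI/setT]_(j <- index_enum 'I_N | (j < i)%N) ~` E j.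
  apply/seteqP; split => z /=.
    move=> <-; have /andP[/eqP h1 /forallP h2] := sel_spec z.
    split; first by rewrite /E /= h1 subrr.
    apply/bigI_mem => j _ ji; rewrite /E /= => /eqP; rewrite subr_eq0 => /eqP e.
    by have := h2 j; rewrite ji e eqxx.
  move=> [Ei /bigI_mem h]; apply: (first_uniq (sel_spec z)).
  rewrite /first_max; apply/andP; split.
    by move: Ei; rewrite /E /= => /eqP; rewrite subr_eq0.
  apply/forallP => j; apply/implyP => ji; apply/negP => /eqP e.
  by apply: (h j (mem_index_enum j) ji); rewrite /E /= e subrr.
apply: measurableI => //.
apply: bigsetI_measurable => j _.
exact: measurableC.
Qed.

Definition greedy : nat -> T -> 'I_N := fun _ => sel.

Lemma greedy_policy : policy greedy.
Proof. by move=> t i; exact: sel_meas. Qed.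

Lemma LB n z : w z - (Cw * L ^+ n) * kk z <= Sn n greedy z.
Proof.
elim: n z => [|n IH] z.
  rewrite /Sn big_geq // expr0 mulr1.
  by have := hCw z; rewrite ler_norml => /andP[_ h]; lra.
rewrite Sn_rec; last exact: greedy_policy.
set i := greedy 0%N z.
have hi : psib i z = w z by have /andP[/eqP h _] := sel_spec z.
have Bs : Bf (Sn n (fun s => greedy s.+1)) := Bf_Sn n (policy_shift greedy_policy).
have h0 : forall y, w y <= Sn n (fun s => greedy s.+1) y + Cw * L ^+ n * kk y.
  by move=> y; have := IH y; lra.
have h1 := Pint_le i z Bf_w Bs (cL n) h0.
have b0 : 0 <= beta by case/andP: beta01 => /ltW.
have h3 := ler_wpM2l b0 h1.
have h2 := psib_eq i z; rewrite hi in h2.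
rewrite /L exprS.
set A := Pint (P i) (Sn n _) z in h3 *.
set B := Pint (P i) w z in h2 h3.
set K := kk z in h3 *.
set u := lam ^+ n in h3 *.
rewrite exprMn in h3 *.
nra.
Qed.

Lemma Sn_cvg (sigma : nat -> T -> 'I_N) z : policy sigma -> cvgn (fun n => Sn n sigma z).
Proof.
move=> hs.
have -> : (fun n => Sn n sigma z) = series (fun t => beta ^+ t * expay r P sigma t z).
  by apply: funext => n; rewrite /series /Sn.
apply: normed_cvg.
apply: (@series_le_cvg _ _ (geometric (kk z / m') L)).
- by move=> n; exact: normr_ge0.
- move=> n; rewrite /geometric /= mulr_ge0 ?exprn_ge0 ?L_ge0 //.
  by rewrite divr_ge0 ?kk_ge0 // ltW.
- move=> n; rewrite /geometric /= normrM ger0_norm; last first.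
    by rewrite exprn_ge0 //; case/andP: beta01 => /ltW.
  have [_ h] := expay_B n hs.
  have b0 : 0 <= beta ^+ n by rewrite exprn_ge0 //; case/andP: beta01 => /ltW.
  apply: le_trans (ler_wpM2l b0 (h z)) _.
  by rewrite /L exprMn le_eqVlt; apply/orP; left; apply/eqP; field; rewrite gt_eqF.
- by apply: is_cvg_geometric_series; rewrite ger0_norm ?L_ge0 // L_lt1.
Qed.

Lemma mon_le n p z : (n <= p)%N -> Cw * L ^+ p * kk z <= Cw * kk z * L ^+ n.
Proof.
move=> np; rewrite mulrAC; apply: ler_wpM2l; first by rewrite mulr_ge0 ?kk_ge0.
apply: ler_wiXn2l => //; first exact: L_ge0.
exact: ltW L_lt1.
Qed.

Lemma vpol_eq (sigma : nat -> T -> 'I_N) z : vpol r beta P sigma z = limn (fun n => Sn n sigma z).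
Proof. by []. Qed.

Lemma vpol_le (sigma : nat -> T -> 'I_N) z : policy sigma -> vpol r beta P sigma z <= w z.
Proof.
move=> hs; rewrite -subr_le0.
apply: (@geo_le0 _ _ (Cw * kk z) L); first by rewrite L_ge0 L_lt1.
move=> n; rewrite lerBlDl vpol_eq.
apply: (lim_le_near (n:=n) (@Sn_cvg sigma z hs)) => p np.
by apply: le_trans (UB p hs z) _; rewrite lerD2l; exact: mon_le.
Qed.

Lemma vpol_greedy z : vpol r beta P greedy z = w z.
Proof.
apply/eqP; rewrite -subr_eq0 -normr_le0.
apply: (@geo_le0 _ _ (Cw * kk z) L); first by rewrite L_ge0 L_lt1.
move=> n; rewrite vpol_eq.
have mon p : (n <= p)%N -> Cw * L ^+ p * kk z <= Cw * kk z * L ^+ n.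
  exact: mon_le.
rewrite ler_norml; apply/andP; split.
  rewrite lerBrDr; apply: (lim_ge_near (n:=n) (@Sn_cvg greedy z greedy_policy)) => p np.
  have := LB p z; have := mon p np; lra.
rewrite lerBlDr; apply: (lim_le_near (n:=n) (@Sn_cvg greedy z greedy_policy)) => p np.
have := UB p greedy_policy z; have := mon p np; lra.
Qed.

Lemma vstar_eq z : vstar r beta P z = (w z)%:E.
Proof.
apply/eqP; rewrite eq_le; apply/andP; split.
  apply: ge_ereal_sup => _ [sigma hs <-]; rewrite lee_fin; exact: vpol_le.
rewrite -vpol_greedy; apply: ereal_sup_ubound.
by exists greedy => //; exact: greedy_policy.
Qed.

End Bounds.

Lemma vstar_eq' z : vstar r beta P z = (w z)%:E.
Proof. by have [Cw Cw0 h] := ex_Cw; exact: (vstar_eq Cw0 h). Qed.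

Lemma psistar_eq : psistar r beta P = psib.
Proof.
apply: funext => i; apply: funext => z.
rewrite /psistar (_ : (fun z' => fine (vstar r beta P z')) = w); last first.
  by apply: funext => y; rewrite vstar_eq'.
by rewrite psib_eq.
Qed.

Lemma uniq_fix psi : PB psi -> Qop r beta P psi = psi -> psi = psib.
Proof.
move=> hp hq.
have [C C0 hC] : exists2 C, 0 <= C & forall i z, `|psi i z - psib i z| <= C * kk z.
  case: hp => _ [C1 C10 h1]; case: PB_psib' => _ [C2 C20 h2].
  exists (C1 + C2); first exact: addr_ge0.
  by move=> i z; rewrite mulrDl; apply: le_trans (ler_normB _ _) _; apply: lerD.
have H n : forall i z, `|psi i z - psib i z| <= (C * L ^+ n) * kk z.
  elim: n => [|n IH] i z; first by rewrite expr0 mulr1.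
  rewrite -hq -psib_fix' (_ : C * L ^+ n.+1 = L * (C * L ^+ n)); last by rewrite exprS; ring.
  apply: Q_lip => //; first exact: PB_psib'.
  by rewrite mulr_ge0 // exprn_ge0 // L_ge0.
apply: funext => i; apply: funext => z.
apply/eqP; rewrite -subr_eq0 -normr_le0.
apply: (@geo_le0 _ _ (C * kk z) L); first by rewrite L_ge0 L_lt1.
by move=> n; rewrite mulrAC; exact: H.
Qed.

Lemma part2 : (forall z, vstar r beta P z \is a fin_num)
      /\ prod_bk kk (psistar r beta P)
      /\ Qop r beta P (psistar r beta P) = psistar r beta P
      /\ (forall psi, prod_bk kk psi -> Qop r beta P psi = psi ->
            psi = psistar r beta P).
Proof.
split; first by move=> z; rewrite vstar_eq'.
rewrite psistar_eq; split; first by apply/prod_bk_PB; exact: PB_psib'.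
split; first exact: psib_fix'.
by move=> psi /prod_bk_PB hp hq; exact: uniq_fix.
Qed.

End Main.

Theorem theorem3 (d : measure_display) (T : measurableType d) (R : realType)
  (N : nat) (P : 'I_N -> R.-pker T ~> T) (r : 'I_N -> T -> R) (beta : R)
  (g : T -> R) (m dd m' d' : R) :
  (0 < N)%N ->
  (forall i, measurable_fun setT (r i)) ->
  0 < beta < 1 ->
  measurable_fun setT g -> (forall z, 0 <= g z) ->
  0 <= m -> 0 <= dd -> beta * m < 1 ->
  (forall z (i j : 'I_N), (\int[P j z]_y (`|r i y|)%:E <= (g z)%:E)%E) ->
  (forall z (i : 'I_N), (\int[P i z]_y (g y)%:E <= (m * g z + dd)%:E)%E) ->
  0 < m' -> 0 < d' ->
  1 < N%:R * m' + m -> beta * (N%:R * m' + m) < 1 ->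
  dd / (N%:R * m' + m - 1) <= d' ->
  let k := fun z => m' * (\sum_(i < N) `|r i z|) + g z + d' in
  contraction_on (prod_bk k) (Qop r beta P) (rho_k k) (beta * (N%:R * m' + m))
  /\ ((forall z, vstar r beta P z \is a fin_num)
      /\ prod_bk k (psistar r beta P)
      /\ Qop r beta P (psistar r beta P) = psistar r beta P
      /\ (forall psi, prod_bk k psi -> Qop r beta P psi = psi ->
            psi = psistar r beta P)).
Proof.
move=> N0 mr b01 mg g0 m0 dd0 bm rg gg m'0 d'0 l1 L1 dd' k.
split.
  exact: (part1 N0 mr b01 mg g0 rg gg m'0 d'0 l1 L1 dd').
exact: (part2 N0 mr b01 mg g0 rg gg m'0 d'0 l1 L1 dd').
Qed.
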